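(* Let $e_1,e_2$ be KAT expressions. Every execution of $\mathsf{equiv}(\{(\{e_1\},\{e_2\})\},\emptyset)$ terminates (i.e. after finitely many recursive calls it returns $\mathsf{True}$ or $\mathsf{False}$), regardless of which pair is selected from $S$ at each call.
   Context: Let $\Sigma$ be a finite nonempty set of action symbols and $T=\{t_1,\dots,t_l\}$ a finite nonempty set of test symbols. Boolean expressions: $b::=0\mid 1\mid t\mid \overline{b}\mid b_1+b_2\mid b_1 b_2$; KAT expressions (syntactic terms): $e::=p\in\Sigma\mid b\mid e_1+e_2\mid e_1e_2\mid e^*$. $\mathsf{At}$ is the set of atoms (words $b_1\cdots b_l$ with $b_i\in\{t_i,\overline{t_i}\}$), identified with truth assignments to $T$; $\alpha\le b$ means $b$ is true under $\alpha$. $\mathsf{E}_\alpha(p)=0$; $\mathsf{E}_\alpha(b)=1$ iff $\alpha\le b$; $\mathsf{E}_\alpha(e_1+e_2)=\max(\mathsf{E}_\alpha(e_1),\mathsf{E}_\alpha(e_2))$; $\mathsf{E}_\alpha(e_1e_2)=\mathsf{E}_\alpha(e_1)\mathsf{E}_\alpha(e_2)$; $\mathsf{E}_\alpha(e^* )=1$; for a finite set $E$ of expressions, $\mathsf{E}_\alpha(E)=\max_{e\in E}\mathsf{E}_\alpha(e)$ ($0$ if $E=\emptyset$). The function $\mathsf{f}$ maps an expression to a set of pairs in $(\mathsf{At}\cdot\Sigma)\times\mathsf{Exp}$: $\mathsf{f}(p)=\{(\alpha p,1)\mid\alpha\in\mathsf{At}\}$; $\mathsf{f}(b)=\emptyset$;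 $\mathsf{f}(e_1+e_2)=\mathsf{f}(e_1)\cup\mathsf{f}(e_2)$; $\mathsf{f}(e_1e_2)=\mathsf{f}(e_1)\cdot e_2\cup\{(\alpha p,e)\in\mathsf{f}(e_2)\mid\mathsf{E}_\alpha(e_1)=1\}$; $\mathsf{f}(e^* )=\mathsf{f}(e)\cdot e^*$, where $P\cdot e=\{(\alpha p,e'e)\mid(\alpha p,e')\in P\}$ if $e$ is neither the constant $0$ nor $1$, $P\cdot0=\emptyset$, $P\cdot1=P$. For a set $E$, $\mathsf{f}(E)=\bigcup_{e\in E}\mathsf{f}(e)$, $\mathsf{der}_{\alpha p}(E)=\{e'\mid(\alpha p,e')\in\mathsf{f}(E)\}$, and $\mathsf{hd}(E)=\{\alpha p\mid(\alpha p,e')\in\mathsf{f}(E)\}$. Define $\mathsf{derivatives}(E_1,E_2)=\{(\mathsf{der}_{\alpha p}(E_1),\mathsf{der}_{\alpha p}(E_2))\mid\alpha p\in\mathsf{hd}(E_1\cup E_2)\}$. The procedure $\mathsf{equiv}(S,H)$, where $S,H$ are sets of pairs of finite sets of KAT expressions, is: $\mathsf{equiv}(\emptyset,H)=\mathsf{True}$; otherwise choose some pair $(E_1,E_2)\in S$ and write $S=\{(E_1,E_2)\}\cup S_0$ with $(E_1,E_2)\notin S_0$; if there exists $\alpha\in\mathsf{At}$ with $\mathsf{E}_\alpha(E_1)\ne\mathsf{E}_\alpha(E_2)$ return $\mathsf{False}$; otherwise let $H'=\{(E_1,E_2)\}\cup H$, $S'=\{d\in\mathsf{derivatives}(E_1,E_2)\mid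 d\notin H'\}$, and return $\mathsf{equiv}(S_0\cup S',H')$. *)

(* Defs.v *)
From HB Require Import structures.
From mathcomp Require Import all_boot.

Set Implicit Arguments.
Unset Strict Implicit.
Unset Printing Implicit Defensive.

(* Test symbols T = {t_1,...,t_l} are indexed by 'I_l. *)
Inductive bexp (l : nat) : Type :=
  | BZero | BOne | BTest of 'I_l | BNeg of bexp l
  | BPlus of bexp l & bexp l | BMul of bexp l & bexp l.

Inductive kexp (Sigma : Type) (l : nat) : Type :=
  | KAct of Sigma
  | KTest of bexp l
  | KPlus of kexp Sigma l & kexp Sigma l
  | KSeq of kexp Sigma l & kexp Sigma l
  | KStar of kexp Sigma l.

Arguments BZero {l}. Arguments BOne {l}.
Arguments KAct {Sigma l}. Arguments KTest {Sigma l}.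
Arguments KPlus {Sigma l}. Arguments KSeq {Sigma l}. Arguments KStar {Sigma l}.

Fixpoint bexp_eqb l (b1 b2 : bexp l) : bool :=
  match b1, b2 with
  | BZero, BZero => true
  | BOne, BOne => true
  | BTest i, BTest j => i == j
  | BNeg a, BNeg b => bexp_eqb a b
  | BPlus a1 a2, BPlus b1 b2 => bexp_eqb a1 b1 && bexp_eqb a2 b2
  | BMul a1 a2, BMul b1 b2 => bexp_eqb a1 b1 && bexp_eqb a2 b2
  | _, _ => false
  end.

Lemma bexp_eqP l : Equality.axiom (@bexp_eqb l).
Proof.
elim=> [|| i | a IHa | a1 IH1 a2 IH2 | a1 IH1 a2 IH2]
       [|| j | b | b1 b2 | b1 b2] /=; try by constructor.
- by apply: (iffP eqP) => [->|[->]].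
- by apply: (iffP (IHa b)) => [->|[->]].
- by apply: (iffP andP) => [[/IH1 -> /IH2 ->]|[<- <-]]; split; [apply/IH1|apply/IH2].
- by apply: (iffP andP) => [[/IH1 -> /IH2 ->]|[<- <-]]; split; [apply/IH1|apply/IH2].
Qed.

HB.instance Definition _ l := hasDecEq.Build (bexp l) (@bexp_eqP l).

Fixpoint kexp_eqb (Sigma : eqType) l (e1 e2 : kexp Sigma l) : bool :=
  match e1, e2 with
  | KAct p, KAct q => p == q
  | KTest a, KTest b => a == b
  | KPlus a1 a2, KPlus b1 b2 => kexp_eqb a1 b1 && kexp_eqb a2 b2
  | KSeq a1 a2, KSeq b1 b2 => kexp_eqb a1 b1 && kexp_eqb a2 b2
  | KStar a, KStar b => kexp_eqb a b
  | _, _ => false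
  end.

Lemma kexp_eqP (Sigma : eqType) l : Equality.axiom (@kexp_eqb Sigma l).
Proof.
elim=> [p | a | a1 IH1 a2 IH2 | a1 IH1 a2 IH2 | a IHa]
       [q | b | b1 b2 | b1 b2 | b] /=; try by constructor.
- by apply: (iffP eqP) => [->|[->]].
- by apply: (iffP eqP) => [->|[->]].
- by apply: (iffP andP) => [[/IH1 -> /IH2 ->]|[<- <-]]; split; [apply/IH1|apply/IH2].
- by apply: (iffP andP) => [[/IH1 -> /IH2 ->]|[<- <-]]; split; [apply/IH1|apply/IH2].
- by apply: (iffP (IHa b)) => [->|[->]].
Qed.

HB.instance Definition _ (Sigma : eqType) l :=
  hasDecEq.Build (kexp Sigma l) (@kexp_eqP Sigma l).

Section KAT.
Variables (Sigma : finType) (l : nat).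

(* Atoms = truth assignments to the test symbols. *)
Definition atom := {ffun 'I_l -> bool}.

(* alpha <= b  iff  b is true under alpha *)
Fixpoint beval (a : atom) (b : bexp l) : bool :=
  match b with
  | BZero => false
  | BOne => true
  | BTest i => a i
  | BNeg b => ~~ beval a b
  | BPlus b1 b2 => beval a b1 || beval a b2
  | BMul b1 b2 => beval a b1 && beval a b2
  end.

Notation exp := (kexp Sigma l).

(* E_alpha, with values in {0,1} represented as bool (max = ||, product = &&) *)
Fixpoint Eps (a : atom) (e : exp) : bool :=
  match e with
  | KAct _ => false
  | KTest b => beval a b
  | KPlus e1 e2 => Eps a e1 || Eps a e2
  | KSeq e1 e2 => Eps a e1 && Eps a e2
  | KStar _ => true
  end.

Definition EpsS (a : atom) (E : seq exp) : bool := has (Eps a) E.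

Definition cdot (P : seq ((atom * Sigma) * exp)) (e : exp)
  : seq ((atom * Sigma) * exp) :=
  match e with
  | KTest BZero => [::]
  | KTest BOne => P
  | _ => [seq (x.1, KSeq x.2 e) | x <- P]
  end.

Fixpoint f (e : exp) : seq ((atom * Sigma) * exp) :=
  match e with
  | KAct p => [seq ((a, p), KTest BOne) | a <- enum {: atom}]
  | KTest _ => [::]
  | KPlus e1 e2 => f e1 ++ f e2
  | KSeq e1 e2 => cdot (f e1) e2 ++ [seq x <- f e2 | Eps x.1.1 e1]
  | KStar e1 => cdot (f e1) (KStar e1)
  end.

Definition fS (E : seq exp) := flatten (map f E).
Definition der (ap : atom * Sigma) (E : seq exp) : seq exp :=
  [seq x.2 | x <- fS E & x.1 == ap].
Definition hd (E : seq exp) : seq (atom * Sigma) := [seq x.1 | x <- fS E].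
Definition derivatives (E1 E2 : seq exp) : seq (seq exp * seq exp) :=
  [seq (der ap E1, der ap E2) | ap <- hd (E1 ++ E2)].

(* Finite sets are represented by lists, compared extensionally. *)
Definition seteqb (A B : seq exp) : bool := all (mem B) A && all (mem A) B.
Definition pair_eqb (d d' : seq exp * seq exp) : bool :=
  seteqb d.1 d'.1 && seteqb d.2 d'.2.
Definition pin (d : seq exp * seq exp) (S : seq (seq exp * seq exp)) : bool :=
  has (pair_eqb d) S.
Definition sseteq (S S' : seq (seq exp * seq exp)) : Prop :=
  all (fun d => pin d S') S /\ all (fun d => pin d S) S'.

Definition state := (seq (seq exp * seq exp) * seq (seq exp * seq exp))%type.

(* equiv_step (S', H') (S, H): the call equiv(S,H) does not return
   (S nonempty, chosen pair passes the atom test) and makes the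
   recursive call equiv(S', H'), for some choice of the pair (E1,E2). *)
Definition equiv_step (next cur : state) : Prop :=
  let: (Sc, Hc) := cur in
  let: (Sn, Hn) := next in
  exists (d : seq exp * seq exp) (S0 : seq (seq exp * seq exp)),
    [/\ sseteq Sc (d :: S0), ~~ pin d S0,
        (forall a : atom, EpsS a d.1 = EpsS a d.2),
        sseteq Hn (d :: Hc) &
        sseteq Sn (S0 ++ [seq d' <- derivatives d.1 d.2 | ~~ pin d' Hn])].

End KAT.

(* Main.v *)
Require Import Defs.
From HB Require Import structures.
From mathcomp Require Import all_boot.
From mathcomp Require Import zify.

Set Implicit Arguments.
Unset Strict Implicit.
Unset Printing Implicit Defensive.

Section Proof.
Variables (Sigma : finType) (l : nat).
Local Notation exp := (kexp Sigma l).

Definition Dcdot (L : seq exp) (e : exp) : seq exp :=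
  match e with
  | KTest BZero => [::]
  | KTest BOne => L
  | _ => [seq KSeq x e | x <- L]
  end.

Lemma cdot_snd (P : seq ((atom l * Sigma) * exp)) e :
  map snd (cdot P e) = Dcdot (map snd P) e.
Proof.
by case: e => [p|[||i|bb|b1 b2|b1 b2]|a c|a c|a] /=; rewrite -?map_comp.
Qed.

Fixpoint D (e : exp) : seq exp :=
  match e with
  | KAct _ => [:: KTest BOne]
  | KTest _ => [::]
  | KPlus a b => D a ++ D b
  | KSeq a b => Dcdot (D a) b ++ D b
  | KStar a => Dcdot (D a) (KStar a)
  end.

Definition snds (x : exp) := map snd (f x).
Definition closedL (L : seq exp) := forall x, x \in L -> {subset snds x <= L}.

Lemma Dcdot_mono L L' e : {subset L <= L'} -> {subset Dcdot L e <= Dcdot L' e}.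
Proof.
move=> H.
by case: e => [p|[||i|bb|b1 b2|b1 b2]|a c|a c|a] //= y /mapP[z zL ->]; rewrite map_f // H.
Qed.

Lemma snds_seq a b : {subset snds (KSeq a b) <= Dcdot (snds a) b ++ snds b}.
Proof.
move=> y; rewrite /snds [f (KSeq a b)]/= map_cat cdot_snd mem_cat => /orP[H|/mapP[z]]; first by rewrite mem_cat; apply/orP; left; exact: H.
by rewrite mem_filter => /andP[_ zf] ->; rewrite mem_cat (map_f _ zf) orbT.
Qed.

Lemma Dcdot_step L b M :
  (forall x, x \in L -> {subset snds x <= L}) -> {subset snds b <= M} ->
  forall x, x \in Dcdot L b -> {subset snds x <= Dcdot L b ++ M}.
Proof.
move=> HL HM.
case: b HM => [p|bb|a c|a c|a] HM x /=;
  try (move=> /mapP[x' x'L ->] y /snds_seq; rewrite !mem_cat => /orP[/mapP[z zs ->]|ys];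
    [by rewrite map_f // (HL x' x'L) | by rewrite (HM y ys) orbT]).
case: bb HM => [| | i | bb | b1 b2 | b1 b2] HM /=;
  try (move=> /mapP[x' x'L ->] y /snds_seq; rewrite !mem_cat => /orP[/mapP[z zs ->]|ys];
    [by rewrite map_f // (HL x' x'L) | by rewrite (HM y ys) orbT]).
- by [].
- by move=> xL y /(HL x xL) yL; rewrite mem_cat yL.
Qed.

Lemma D_prop e : {subset snds e <= D e} /\ closedL (D e).
Proof.
elim: e => [p|b|a [Ha1 Ha2] c [Hc1 Hc2]|a [Ha1 Ha2] c [Hc1 Hc2]|a [Ha1 Ha2]].
- split.
  + move=> y; rewrite /snds /= -map_comp => /mapP[z _ ->]; by rewrite inE.
  + by move=> x; rewrite inE => /eqP -> y.
- by split => // x.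
- split.
  + by move=> y; rewrite /snds /= map_cat !mem_cat => /orP[/Ha1->|/Hc1->] //; rewrite orbT.
  + move=> x /=; rewrite mem_cat => /orP[/Ha2 H y /H|/Hc2 H y /H]; rewrite mem_cat => -> //.
    by rewrite orbT.
- split.
  + move=> y /snds_seq; rewrite !mem_cat => /orP[/(Dcdot_mono Ha1)->//|/Hc1->].
    by rewrite orbT.
  + move=> x /=; rewrite mem_cat => /orP[xin|/Hc2 H y /H].
    * exact: (Dcdot_step Ha2 Hc1).
    * by rewrite mem_cat => ->; rewrite orbT.
- have H1 : {subset snds (KStar a) <= D (KStar a)}.
    move=> y; rewrite /snds [f (KStar a)]/= -map_comp => /mapP[z zf ->]; by rewrite /= map_f // Ha1 // /snds map_f.
  split => //.
  move=> x xin y /(Dcdot_step Ha2 H1 xin); by rewrite mem_cat orbb.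
Qed.

Lemma closed_U e : closedL (e :: D e).
Proof.
case: (D_prop e) => H1 H2 x; rewrite inE => /orP[/eqP->|xD] y yin; rewrite inE.
- by rewrite H1 // orbT.
- by rewrite (H2 x) // orbT.
Qed.

Lemma der_sub U ap E : closedL U -> {subset E <= U} -> {subset der ap E <= U}.
Proof.
move=> HU HE y /mapP[z]; rewrite mem_filter => /andP[_ /flatten_mapP[x xE zf]] ->.
by apply: (HU x (HE x xE)); rewrite /snds map_f.
Qed.

Implicit Types (d x y : seq exp * seq exp) (S A B H : seq (seq exp * seq exp)).
Lemma seteqbP (A0 B0 : seq exp) : reflect (A0 =i B0) (seteqb A0 B0).
Proof.
apply: (iffP andP).
- by case=> /allP hA /allP hB x; apply/idP/idP => [/hA|/hB].
- by move=> h; split; apply/allP => x; rewrite /= h.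
Qed.

Lemma peq_refl d : pair_eqb d d.
Proof. by rewrite /pair_eqb; apply/andP; split; apply/seteqbP. Qed.

Lemma peq_sym d d' : pair_eqb d d' -> pair_eqb d' d.
Proof.
by case/andP => /seteqbP h1 /seteqbP h2; apply/andP; split; apply/seteqbP.
Qed.

Lemma peq_trans d1 d2 d3 : pair_eqb d1 d2 -> pair_eqb d2 d3 -> pair_eqb d1 d3.
Proof.
case/andP => /seteqbP h1 /seteqbP h2 /andP[/seteqbP h3 /seteqbP h4].
by apply/andP; split; apply/seteqbP => x; rewrite ?h1 ?h3 ?h2 ?h4.
Qed.

Lemma pin_peq d d' S : pair_eqb d d' -> pin d' S -> pin d S.
Proof. by move=> h /hasP[x xS hx]; apply/hasP; exists x => //; apply: peq_trans hx. Qed.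

Lemma pin_trans x A B : pin x A -> all (fun y => pin y B) A -> pin x B.
Proof. by move=> /hasP[y yA hxy] /allP H; apply: pin_peq hxy (H y yA). Qed.

Lemma pin_cons x d S : pin x (d :: S) = pair_eqb x d || pin x S.
Proof. by []. Qed.

Variables (e1 e2 : exp).
Definition U1 := e1 :: D e1.
Definition U2 := e2 :: D e2.

Definition inU (d : seq exp * seq exp) := all (mem U1) d.1 && all (mem U2) d.2.

Lemma inU_peq d d' : pair_eqb d d' -> inU d' -> inU d.
Proof.
case/andP => /seteqbP h1 /seteqbP h2 /andP[/allP a1 /allP a2].
by apply/andP; split; apply/allP => x; [rewrite h1 => /a1 | rewrite h2 => /a2].
Qed.

Lemma inU_pin x A : pin x A -> all inU A -> inU x.
Proof. by move=> /hasP[y yA hxy] /allP H; apply: inU_peq hxy (H y yA). Qed.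

Definition T : finType := ({ffun 'I_(size U1) -> bool} * {ffun 'I_(size U2) -> bool})%type.
Definition code (d : seq exp * seq exp) : T :=
  ([ffun i : 'I_(size U1) => nth e1 U1 i \in d.1], [ffun i : 'I_(size U2) => nth e2 U2 i \in d.2]).

Lemma code_peq d d' : pair_eqb d d' -> code d = code d'.
Proof.
case/andP => /seteqbP h1 /seteqbP h2.
by rewrite /code; congr pair; apply/ffunP => i; rewrite !ffunE ?h1 ?h2.
Qed.

Lemma code1_inj (U A B : seq exp) (e0 : exp) :
  {subset A <= U} -> {subset B <= U} ->
  [ffun i : 'I_(size U) => nth e0 U i \in A] = [ffun i : 'I_(size U) => nth e0 U i \in B] ->
  A =i B.
Proof.
move=> hA hB E x; apply/idP/idP => xin.
- have hi : index x U < size U by rewrite index_mem hA.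
  move/ffunP: E => /(_ (Ordinal hi)); rewrite !ffunE /= nth_index ?hA //.
  by rewrite xin => <-.
- have hi : index x U < size U by rewrite index_mem hB.
  move/ffunP: E => /(_ (Ordinal hi)); rewrite !ffunE /= nth_index ?hB //.
  by rewrite xin => ->.
Qed.

Lemma code_inj d d' : inU d -> inU d' -> code d = code d' -> pair_eqb d d'.
Proof.
case/andP => /allP a1 /allP a2 /andP[/allP b1 /allP b2] [E1 E2].
apply/andP; split; apply/seteqbP; apply: code1_inj; [exact: a1|exact: b1|exact: E1|exact: a2|exact: b2|exact: E2].
Qed.

Definition Cset (H : seq (seq exp * seq exp)) : {set T} := [set c | c \in map code H].

Lemma pin_Cset x H : pin x H -> code x \in Cset H.
Proof.
by move=> /hasP[y yH hxy]; rewrite inE (code_peq hxy) map_f.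
Qed.

Definition Inv (S H : seq (seq exp * seq exp)) :=
  [&& all inU S, all inU H & all (fun x => ~~ pin x H) S].

Lemma step_inv Sc Hc Sn Hn :
  Inv Sc Hc -> equiv_step (Sn, Hn) (Sc, Hc) ->
  Inv Sn Hn /\ #|Cset Hc| < #|Cset Hn|.
Proof.
case/and3P => iS iH nS [d [S0 [[hSc1 hSc2] hd _ [hHn1 hHn2] [hSn1 hSn2]]]].
have pd : pin d Sc by move: hSc2 => /= /andP[].
have uD : inU d by apply: inU_pin pd iS.
have ndH : ~~ pin d Hc.
  by move: pd => /hasP[z zS hdz]; apply/negP => /(pin_peq (peq_sym hdz));
     move/allP: nS => /(_ z zS) /negP.
have pS0 : forall y, y \in S0 -> pin y Sc by move: hSc2 => /= /andP[_ /allP].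
have uS0 : forall y, y \in S0 -> inU y by move=> y /pS0 /inU_pin; apply.
have nS0 : forall y, y \in S0 -> ~~ pin y Hc.
  move=> y /pS0 /hasP[z zS hyz]; apply/negP => /(pin_peq (peq_sym hyz)).
  by move/allP: nS => /(_ z zS) /negP.
have uHn : all inU Hn.
  apply/allP => x /(allP hHn1) /hasP[w]; rewrite inE => /orP[/eqP->|wH] hxw.
  + exact: inU_peq hxw uD.
  + exact: inU_peq hxw (allP iH w wH).
have uDer : all inU (derivatives d.1 d.2).
  apply/allP => x /mapP[ap _ ->]; case/andP: uD => /allP a1 /allP a2.
  apply/andP; split; apply/allP => y /=.
  + by apply: der_sub; [exact: closed_U | exact: a1].
  + by apply: der_sub; [exact: closed_U | exact: a2].
split.
- apply/and3P; split => //.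
  + apply/allP => x /(allP hSn1) /hasP[w]; rewrite mem_cat => /orP[wS|].
      by move=> hxw; apply: inU_peq hxw (uS0 w wS).
    by rewrite mem_filter => /andP[_ wD] hxw; apply: inU_peq hxw (allP uDer w wD).
  + apply/allP => x /(allP hSn1) /hasP[w]; rewrite mem_cat => /orP[wS|].
    * move=> hxw; apply/negP => /(pin_peq (peq_sym hxw)) pw.
      move: (pin_trans pw hHn1); rewrite pin_cons => /orP[hwd|].
      -- by move: hd => /negP; apply; apply/hasP; exists w => //; apply: peq_sym.
      -- by apply/negP; apply: nS0.
    * rewrite mem_filter => /andP[nw _] hxw; apply/negP => /(pin_peq (peq_sym hxw)).
      by apply/negP.
- apply: proper_card; apply/properP; split.
  + apply/subsetP => c; rewrite inE => /mapP[h hH ->].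
    apply: pin_Cset; move: hHn2 => /= /andP[_ /allP]; apply; exact: hH.
  + exists (code d).
      by apply: pin_Cset; move: hHn2 => /= /andP[].
    rewrite inE; apply/negP => /mapP[h hH hc].
    move: ndH => /negP; apply; apply/hasP; exists h => //.
    by apply: code_inj hc => //; apply: (allP iH).
Qed.

Lemma acc_main n : forall S H, #|T| - #|Cset H| < n -> Inv S H ->
  Acc (@equiv_step Sigma l) (S, H).
Proof.
elim: n => [|n IH] S H hn hI; first by rewrite ltn0 in hn.
 constructor => -[Sn Hn] st.
case: (step_inv hI st) => hI' hlt.
apply: IH hI'.
have := max_card (Cset Hn); lia.
Qed.

End Proof.

Theorem proposition4 (Sigma : finType) (l : nat)
  (HSigma : 0 < #|Sigma|) (Hl : 0 < l) (e1 e2 : kexp Sigma l) :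
  Acc (@equiv_step Sigma l) ([:: ([:: e1], [:: e2])], [::]).
Proof.
apply: (@acc_main Sigma l e1 e2 (#|T e1 e2| - #|Cset e1 e2 [::]|).+1); first exact: ltnSn.
by rewrite /Inv /inU /= /U1 /U2 !inE !eqxx.
Qed.
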